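(* Let $A\cong \mathrm{Aff}(E,C)$ be a group of affine cyclic type. Let $G$ be a finite group with a normal subgroup $N$ such that $G/N\cong A$, and assume that no proper subgroup of $G$ has a quotient isomorphic to $A$. Then $G$ is a group of the form $P\rtimes \mathbb{Z}_m$, where $P$ is a $p$-group, $m$ is a power of a prime $q\ne p$, and the image of $\mathbb{Z}_m$ in $\mathrm{Aut}(P)$ has order at least $|C|$.
   Context: A group of affine cyclic type $\mathrm{Aff}(E,C)$ is a finite group $E\rtimes C$ where $E$ is an elementary abelian $p$-group and $C$ is a cyclic group of prime power order acting faithfully on $E$, with $p\nmid|C|$. $\mathbb{Z}_m$ denotes the cyclic group of order $m$. *)

(* Defs.v *)
From mathcomp Require Import all_boot all_fingroup all_solvable.
Set Implicit Arguments.
Unset Strict Implicit.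
Unset Printing Implicit Defensive.

(* Main.v *)
Require Import Defs.
From mathcomp Require Import all_boot all_fingroup all_solvable.
Local Open Scope group_scope.

Theorem lemma3p11 (aT gT : finGroupType) (A E C : {group aT}) (p q : nat)
    (G N : {group gT}) :
  prime p -> p.-abelem E ->
  prime q -> q.-group C -> cyclic C ->
  ~~ (p %| #|C|) ->
  'C_C(E) = 1 ->
  E ><| C = A ->
  N <| G -> (G / N) \isog A ->
  (forall H M : {group gT}, H \proper G -> M <| H -> ~ ((H / M) \isog A)) ->
  exists (P Z : {group gT}) (r : nat),
    [/\ P ><| Z = G, p.-group P, cyclic Z,
        [/\ prime r, r != p & r.-group Z]
      & #|C| <= #|conj_aut P @* Z| ].
Proof.
move=> pr_p abE pr_q qC cycC pndC cCE defA nNG isoA min.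
case/isogP: isoA => f injf fGN.
pose phi := comp_morphism (coset_morphism N) f.
have sGD : G \subset coset N @*^-1 (G / N).
  by rewrite -sub_morphim_pre ?normal_norm.
have phiE : forall H : {set gT}, phi @* H = f @* (H / N).
  by move=> H; rewrite morphim_comp.
have phiG : phi @* G = A by rewrite phiE.
have mn : forall H : {group gT}, H \subset G -> phi @* H = A -> H :=: G.
  move=> H sHG fH; apply/eqP; apply: contraT => neHG.
  have prH : H \proper G by rewrite properEneq neHG.
  have sHD := subset_trans sHG sGD.
  suff: False by []; apply: (min H ('ker_H phi)%G prH).
    by rewrite /= -(ker_restrm sHD) ker_normal.
  by rewrite -fH; apply: first_isog_loc.
have [S sylS] := Sylow_exists p G.
have [nsEA sCA defEC nEC tiEC] := sdprod_context defA.
have sylE : p.-Sylow(A) E.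
  rewrite /pHall (normal_sub nsEA) (abelem_pgroup abE) /=.
  by rewrite -(index_sdprod defA) p'natE.
have sSG := pHall_sub sylS.
have sSD := subset_trans sSG sGD.
have phiS : phi @* S = E.
  have sylfS : p.-Sylow(A) (phi @* S) by rewrite -phiG; apply: morphim_pSylow.
  apply/eqP; rewrite eqEcard (card_Hall sylfS) (card_Hall sylE) leqnn andbT.
  by rewrite (sub_normal_Hall sylE nsEA (pHall_sub sylfS)) (pHall_pgroup sylfS).
have sED : E \subset phi @* (coset N @*^-1 (G / N)).
  by rewrite -phiS morphimS.
pose K := (G :&: phi @*^-1 E)%G.
have nsKG : K <| G.
  apply: normalGI (_ : G \subset phi @*^-1 A) _; last by rewrite morphpre_normal // -phiG morphimS.
  by rewrite -sub_morphim_pre // phiG.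
have sKG : K \subset G by apply: subsetIl.
have sSK : S \subset K.
  rewrite /K /= subsetI sSG /=.
  by rewrite -sub_morphim_pre // phiS.
have sylSK : p.-Sylow(K) S := pHall_subl sSK sKG sylS.
have fratt := Frattini_arg nsKG sylSK.
have phiNS : phi @* 'N_G(S) = A.
  apply/eqP; rewrite eqEsubset -{1}phiG morphimS ?subsetIl //=.
  rewrite -{1}phiG -{1}fratt morphimMl ?(subset_trans sKG sGD) //.
  rewrite mul_subG //; apply: (subset_trans (_ : phi @* K \subset phi @* S)).
    by rewrite phiS sub_morphim_pre ?(subset_trans sKG sGD) ?subsetIr.
  by rewrite morphimS // subsetI sSG normG.
have nSG : G \subset 'N(S).
  by rewrite -(mn _ (subsetIl _ _) phiNS) subsetIr.
have nsSG : S <| G by rewrite /normal sSG nSG.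
have [C1 | ntC] := eqsVneq C 1.
  have AE : A = E by apply: val_inj; rewrite /= -defA C1 sdprodg1.
  have SG : S :=: G by apply: mn; rewrite // phiS AE.
  exists S, 1%G, (if p == 2 then 3 else 2).
  split.
  - by rewrite sdprodg1 SG.
  - exact: pHall_pgroup sylS.
  - exact: cyclic1.
  - split; last exact: pgroup1.
      by case: (p == 2).
    by case: (p =P 2) => [->|/eqP] //; rewrite eq_sym.
  - by rewrite C1 cards1 cardG_gt0.
have [c defC] := cyclicP cycC.
have Ac : c \in phi @* G by rewrite phiG (subsetP sCA) // defC cycle_id.
case/morphimP: Ac => g Dg Gg defc.
pose x := g.`_q.
have Gx : x \in G by rewrite /x groupX.
have Dx : x \in coset N @*^-1 (G / N) by apply: (subsetP sGD).
have qc : q.-elt c by apply: mem_p_elt qC _; rewrite defC cycle_id.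
have phix : phi x = c by rewrite /x morph_constt // -defc constt_p_elt.
pose Z := <[x]>%G.
have sZG : Z \subset G by rewrite cycle_subG.
have sZD := subset_trans sZG sGD.
have phiZ : phi @* Z = C by rewrite morphim_cycle // phix defC.
have qZ : q.-group Z by apply: p_elt_constt.
have neqp : q != p.
  apply: contraNneq pndC => <-.
  by have [_ ? _] := pgroup_pdiv qC ntC.
have nSZ : Z \subset 'N(S) := subset_trans sZG nSG.
have tiSZ : S :&: Z = 1.
  apply: coprime_TIg; apply: (pnat_coprime (pHall_pgroup sylS)).
  apply: sub_in_pnat qZ => r _; rewrite !inE => /eqP->; exact: neqp.
have SZG : S * Z = G.
  rewrite -norm_joinEr //; apply: (mn (S <*> Z)%G).
    by rewrite join_subG sSG.
  by rewrite /= norm_joinEr // morphimMl // phiS phiZ.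
exists S, Z, q; split.
- by rewrite sdprodE.
- exact: pHall_pgroup sylS.
- exact: cycle_cyclic.
- by split.
have sub1 : Z :&: 'C(S) \subset 'ker phi.
  have sZCD : Z :&: 'C(S) \subset coset N @*^-1 (G / N).
    exact: subset_trans (subsetIl _ _) sZD.
  rewrite -sub_morphim_pre //; rewrite -cCE subsetI.
  rewrite -phiZ morphimS ?subsetIl //= -phiS morphim_cents //.
  exact: subsetIr.
rewrite card_morphim ker_conj_aut (setIidPr nSZ) -indexgI.
rewrite -phiZ card_morphim (setIidPr sZD).
exact: dvdn_leq (indexg_gt0 _ _) (indexgS _ sub1).
Qed.
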